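(* Let $\mathcal{H}$ be a complex Hilbert space and let $A\in\mathcal{B}(\mathcal{H})$ be nonzero. Then \[ \|A\|\left(1-\frac12\left\|I-\frac{A}{\|A\|}\right\|^2\right)\le \omega(A). \]
   Context: $\mathcal{B}(\mathcal{H})$ denotes the algebra of bounded linear operators on $\mathcal{H}$, $I$ the identity operator; $\omega(A)=\sup_{\|x\|=1}|\langle Ax,x\rangle|$ is the numerical radius and $\|\cdot\|$ the operator norm. *)

(* Defs.v *)
From mathcomp Require Import all_boot all_order all_algebra.
From mathcomp Require Import complex.
From mathcomp Require Import classical_sets reals.
Set Implicit Arguments. Unset Strict Implicit. Unset Printing Implicit Defensive.
Import Order.TTheory GRing.Theory Num.Theory.
Local Open Scope ring_scope.
Local Open Scope complex_scope.
Local Open Scope classical_set_scope.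

Section Hilbert.
Variables (R : realType) (V : lmodType R[i]) (inner : V -> V -> R[i]).

Definition is_inner_product : Prop :=
  [/\ (forall (a : R[i]) (x y z : V), inner (a *: x + y) z = a * inner x z + inner y z),
      (forall x y : V, inner y x = (inner x y)^*),
      (forall x : V, 0 <= inner x x) &
      (forall x : V, inner x x = 0 -> x = 0)].

Definition ipnorm (x : V) : R := Num.sqrt (complex.Re (inner x x)).

Definition cmod (z : R[i]) : R := Num.sqrt (complex.Re z ^+ 2 + complex.Im z ^+ 2).

Definition ip_complete : Prop :=
  forall u : nat -> V,
    (forall e : R, 0 < e -> exists N : nat, forall m n : nat,
        (N <= m)%N -> (N <= n)%N -> ipnorm (u m - u n) < e) ->
    exists l : V, forall e : R, 0 < e -> exists N : nat, forall n : nat,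
        (N <= n)%N -> ipnorm (u n - l) < e.

Definition is_linear_op (T : V -> V) : Prop :=
  forall (a : R[i]) (x y : V), T (a *: x + y) = a *: T x + T y.

Definition is_bounded_op (T : V -> V) : Prop :=
  exists M : R, forall x : V, ipnorm (T x) <= M * ipnorm x.

Definition opnorm (T : V -> V) : R :=
  sup [set r : R | exists x : V, ipnorm x = 1 /\ r = ipnorm (T x)].

Definition numrad (T : V -> V) : R :=
  sup [set r : R | exists x : V, ipnorm x = 1 /\ r = cmod (inner (T x) x)].

End Hilbert.

(* Main.v *)
Require Import Defs.
From mathcomp Require Import all_boot all_order all_algebra.
From mathcomp Require Import complex.
From mathcomp Require Import classical_sets reals.
From mathcomp Require Import ring lra.
Set Implicit Arguments.
Import Order.TTheory GRing.Theory Num.Theory.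
Local Open Scope ring_scope.
Local Open Scope complex_scope.

Lemma cReD (R : realType) (u v : R[i]) : complex.Re (u + v) = complex.Re u + complex.Re v.
Proof. by case: u => ? ?; case: v => ? ? /=. Qed.
Lemma cReN (R : realType) (u : R[i]) : complex.Re (- u) = - complex.Re u.
Proof. by case: u => ? ? /=. Qed.
Lemma cReJ (R : realType) (u : R[i]) : complex.Re (u^*) = complex.Re u.
Proof. by case: u => ? ? /=. Qed.
Lemma cImJ (R : realType) (u : R[i]) : complex.Im (u^*) = - complex.Im u.
Proof. by case: u => ? ? /=. Qed.
Lemma cReM (R : realType) (c : R) (u : R[i]) : complex.Re (c%:C * u) = c * complex.Re u.
Proof. by case: u => a b /=; ring. Qed.
Lemma cRei (R : realType) (u : R[i]) : complex.Re (- 'i * u) = complex.Im u.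
Proof. by case: u => a b /=; ring. Qed.
Lemma cRe_le_cmod (R : realType) (u : R[i]) : complex.Re u <= cmod u.
Proof.
rewrite /cmod. apply: (le_trans (ler_norm _)).
rewrite -sqrtr_sqr. apply: ler_wsqrtr. rewrite lerDl. exact: sqr_ge0.
Qed.
Lemma cmod_le (R : realType) (u : R[i]) : cmod u <= `|complex.Re u| + `|complex.Im u|.
Proof.
rewrite /cmod. rewrite -[X in _ <= X]ger0_norm ?addr_ge0 // -sqrtr_sqr.
apply: ler_wsqrtr. rewrite sqrrD !real_normK ?num_real //.
rewrite -addrA lerD2l -[X in X <= _]add0r lerD2r. by rewrite mulrn_wge0 // mulr_ge0.
Qed.

Lemma sq_le (R : realDomainType) (x y : R) : 0 <= x -> x <= y -> x ^+ 2 <= y ^+ 2.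
Proof. move=> h0 h1; rewrite !expr2; apply: ler_pM => //. Qed.

Section IP.
Variables (R : realType) (V : lmodType R[i]) (inner : V -> V -> R[i]).
Hypothesis Hip : is_inner_product inner.

Let Q (x : V) := complex.Re (inner x x).

Lemma ipD x y z : inner (x + y) z = inner x z + inner y z.
Proof. case: Hip => H _ _ _. by rewrite -[x in LHS]scale1r H mul1r. Qed.
Lemma ip0 z : inner 0 z = 0.
Proof. have H := ipD 0 0 z. rewrite addr0 in H. have: inner 0 z + 0 = inner 0 z + inner 0 z by rewrite addr0 -H. by move/addrI. Qed.
Lemma ipZ a x z : inner (a *: x) z = a * inner x z.
Proof. case: Hip => H _ _ _. by rewrite -[_ *: x]addr0 H ip0 addr0. Qed.
Lemma ipN x z : inner (- x) z = - inner x z.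
Proof. by rewrite -scaleN1r ipZ mulN1r. Qed.
Lemma ipC x y : inner y x = (inner x y)^*.
Proof. by case: Hip => _ H _ _. Qed.
Lemma ipDr x y z : inner z (x + y) = inner z x + inner z y.
Proof. by rewrite ipC ipD rmorphD /= -!ipC. Qed.
Lemma ipNr x z : inner z (- x) = - inner z x.
Proof. by rewrite ipC ipN rmorphN /= -ipC. Qed.
Lemma ReC x y : complex.Re (inner y x) = complex.Re (inner x y).
Proof. by rewrite ipC cReJ. Qed.
Lemma Q_ge0 x : 0 <= Q x.
Proof. case: Hip => _ _ H _. have := H x. by rewrite lecE /= => /andP[_]. Qed.
Lemma Im_ii x : complex.Im (inner x x) = 0.
Proof. case: Hip => _ _ H _. have := H x. by rewrite lecE /= => /andP[/eqP <- _]. Qed.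
Lemma Q_eq0 x : Q x = 0 -> x = 0.
Proof.
case: Hip => _ _ _ H Hq. apply: H. move: Hq (Im_ii x). rewrite /Q.
by case: (inner x x) => a b /= -> ->.
Qed.
Lemma QB x y : Q (x - y) = Q x - 2 * complex.Re (inner y x) + Q y.
Proof.
rewrite /Q ipD ipN !ipDr !ipNr !cReD !cReN (ReC y x). ring.
Qed.
Lemma QD x y : Q (x + y) = Q x + 2 * complex.Re (inner y x) + Q y.
Proof.
rewrite /Q ipD !ipDr !cReD (ReC y x). ring.
Qed.
Lemma ReZ (c : R) x y : complex.Re (inner (c%:C *: x) y) = c * complex.Re (inner x y).
Proof. by rewrite ipZ cReM. Qed.
Lemma QZ (c : R) x : Q (c%:C *: x) = c ^+ 2 * Q x.
Proof. rewrite /Q ReZ ipC ipZ cReJ cReM. by rewrite expr2 mulrA. Qed.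
Lemma Qi x : Q (- 'i *: x) = Q x.
Proof.
rewrite /Q ipZ ipC ipZ. move: (Im_ii x). case: (inner x x) => a b /= ->. ring.
Qed.
Lemma Qle2 u v : complex.Re (inner (u - v) (u - v)) <= 2 * complex.Re (inner u u) + 2 * complex.Re (inner v v).
Proof. have := QD u v; have := QB u v; have := Q_ge0 (u + v). rewrite /Q. lra. Qed.
Lemma ReBound y x : `|complex.Re (inner y x)| <= (complex.Re (inner x x) + complex.Re (inner y y)) / 2.
Proof.
have := QD x y; have := QB x y; have := Q_ge0 (x + y); have := Q_ge0 (x - y). rewrite /Q.
case: (lerP 0 (complex.Re (inner y x))) => h.
  rewrite ger0_norm //. lra.
rewrite ltr0_norm //. lra.
Qed.
Lemma ImBound y x : `|complex.Im (inner y x)| <= (complex.Re (inner x x) + complex.Re (inner y y)) / 2.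
Proof. by rewrite -cRei -ipZ -[complex.Re (inner y y)](Qi y); apply: ReBound. Qed.
Lemma cmodBound y x : cmod (inner y x) <= complex.Re (inner x x) + complex.Re (inner y y).
Proof. apply: (le_trans (@cmod_le _ (inner y x))). have := ReBound y x; have := ImBound y x. lra. Qed.
Lemma ipnorm_sq x : ipnorm inner x ^+ 2 = complex.Re (inner x x).
Proof. by rewrite /ipnorm sqr_sqrtr // Q_ge0. Qed.
Lemma ipnorm_ge0 x : 0 <= ipnorm inner x.
Proof. exact: sqrtr_ge0. Qed.
End IP.

Theorem theorem3p1 (R : realType) (V : lmodType R[i]) (inner : V -> V -> R[i])
  (Hip : is_inner_product inner) (Hcomplete : ip_complete inner)
  (A : V -> V) (HAlin : is_linear_op A) (HAbd : is_bounded_op inner A)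
  (HA0 : exists x : V, A x != 0) :
  opnorm inner A *
    (1 - 2^-1 * opnorm inner (fun x => x - ((opnorm inner A)^-1)%:C *: A x) ^+ 2)
  <= numrad inner A.
Proof.
set a := opnorm inner A.
set B := (fun x => x - (a^-1)%:C *: A x).
set b := opnorm inner B.
set w := numrad inner A.
set N := ipnorm inner.
set Q := fun x => complex.Re (inner x x).
have NQ : forall x, N x ^+ 2 = Q x by move=> x; exact: ipnorm_sq.
have N0 : forall x, 0 <= N x by move=> x; exact: ipnorm_ge0.
have Q0 : forall x, 0 <= Q x by move=> x; exact: Q_ge0.
have unitQ : forall x, N x = 1 -> Q x = 1 by move=> x h; rewrite -NQ h expr1n.
have A0 : A 0 = 0.
  have H := HAlin 1 0 0. rewrite !scale1r !addr0 in H.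
  have: A 0 + 0 = A 0 + A 0 by rewrite addr0 -H. by move/addrI.
have AZ : forall c x, A (c *: x) = c *: A x.
  by move=> c x; rewrite -[c *: x]addr0 HAlin A0 addr0.
case: HAbd => M HM.
have HM1 : forall x, N x = 1 -> N (A x) <= M by move=> x h; have := HM x; rewrite -/N h mulr1.
have HMQ : forall x, N x = 1 -> Q (A x) <= M ^+ 2.
  move=> x h; rewrite -NQ; apply: sq_le; [exact: N0 | exact: HM1].
case: HA0 => x0 hx0.
have x0n0 : x0 != 0 by apply: contraNneq hx0 => ->; rewrite A0.
have Qx0 : 0 < Q x0.
  rewrite lt_neqAle Q0 andbT; apply: contraNneq x0n0 => h; apply/eqP.
  exact: (Q_eq0 Hip _ (esym h)).
have Nx0 : 0 < N x0 by rewrite /N /ipnorm sqrtr_gt0.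
set u := ((N x0)^-1)%:C *: x0.
have Qu : Q u = 1.
  rewrite /Q /u (QZ Hip) -/(Q x0) -NQ. by rewrite exprVn mulVf // expf_neq0 // gt_eqF.
have Nu : N u = 1 by rewrite /N /ipnorm -/(Q u) Qu sqrtr1.
have QAu : 0 < Q (A u).
  rewrite /u AZ /Q (QZ Hip) mulr_gt0 ?exprn_gt0 ?invr_gt0 //.
  rewrite lt_neqAle Q0 andbT; apply: contraNneq hx0 => h; apply/eqP.
  exact: (Q_eq0 Hip _ (esym h)).
have NAu : 0 < N (A u) by rewrite /N /ipnorm sqrtr_gt0.
have hubA : has_ubound [set r : R | exists x : V, ipnorm inner x = 1 /\ r = ipnorm inner (A x)].
  by exists M => r [x [hx ->]]; exact: HM1.
have ubA : forall x, N x = 1 -> N (A x) <= a.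
  by move=> x hx; apply: (ub_le_sup hubA); exists x.
have apos : 0 < a by apply: lt_le_trans NAu (ubA _ Nu).
have hubB : has_ubound [set r : R | exists x : V, ipnorm inner x = 1 /\ r = ipnorm inner (B x)].
  exists (3 + 2 * (a ^-2 * M ^+ 2)) => r [x [hx ->]].
  have h1 := Qle2 Hip x ((a^-1)%:C *: A x).
  have h2 : Q ((a^-1)%:C *: A x) <= a ^-2 * M ^+ 2.
    rewrite /Q (QZ Hip) exprVn. apply: ler_wpM2l; first by rewrite invr_ge0 exprn_ge0 // ltW.
    exact: HMQ.
  have h3 := NQ (B x). have h4 := unitQ x hx.
  rewrite /Q in h2 h3 h4. rewrite -/N. rewrite /B in h3 *.
  have h5 := N0 (x - (a^-1)%:C *: A x).
  nra.
have ubB : forall x, N x = 1 -> N (B x) <= b.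
  by move=> x hx; apply: (ub_le_sup hubB); exists x.
have hubw : has_ubound [set r : R | exists x : V, ipnorm inner x = 1 /\ r = cmod (inner (A x) x)].
  exists (1 + M ^+ 2) => r [x [hx ->]].
  apply: le_trans (cmodBound Hip _ _) _. have := HMQ x hx; have := unitQ x hx. rewrite /Q. lra.
have ubw : forall x, N x = 1 -> cmod (inner (A x) x) <= w.
  by move=> x hx; apply: (ub_le_sup hubw); exists x.
have b0 : 0 <= b by apply: le_trans (N0 (B u)) (ubB _ Nu).
set K := a ^+ 2 * b ^+ 2 - a ^+ 2 + 2 * a * w.
have key : forall x, N x = 1 -> N (A x) <= Num.sqrt K.
  move=> x hx.
  have e : Q (B x) = Q x - 2 * (a^-1 * complex.Re (inner (A x) x)) + a ^-2 * Q (A x).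
    by rewrite /Q /B (QB Hip) (ReZ Hip) (QZ Hip) exprVn.
  have e2 : a ^+ 2 * Q (B x) = a ^+ 2 - 2 * a * complex.Re (inner (A x) x) + Q (A x).
    rewrite e unitQ //. field. by rewrite gt_eqF.
  have hB : a ^+ 2 * Q (B x) <= a ^+ 2 * b ^+ 2.
    apply: ler_wpM2l; first exact: exprn_ge0 (ltW apos).
    rewrite -NQ. apply: sq_le; [exact: N0 | exact: ubB].
  have hw : complex.Re (inner (A x) x) <= w := le_trans (@cRe_le_cmod _ (inner (A x) x)) (ubw x hx).
  have hw2 : a * complex.Re (inner (A x) x) <= a * w by apply: ler_wpM2l; [exact: ltW|].
  have hQA : Q (A x) <= K by rewrite /K; lra.
  rewrite /N /ipnorm. exact: ler_wsqrtr.
have aK : a <= Num.sqrt K.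
  apply: ge_sup; first by exists (N (A u)), u.
  by move=> r [x [hx ->]]; exact: key.
have Kpos : 0 < K.
  rewrite ltNge; apply/negP => hK.
  move: aK; have -> : Num.sqrt K = 0 by apply/eqP; rewrite sqrtr_eq0.
  by move=> h; move: (lt_le_trans apos h); rewrite ltxx.
have aK2 : a ^+ 2 <= K.
  rewrite -(sqr_sqrtr (ltW Kpos)). apply: sq_le; [exact: ltW | exact: aK].
rewrite /K in aK2.
nra.
Qed.
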